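(* Let $N \ge 2$, let $0 \le z_1 < \dots < z_N < 1$, let $\alpha_1,\dots,\alpha_N>0$ with $\sum_i \alpha_i = 1$, and let $\mu = \sum_{i=1}^N \alpha_i \delta_{z_i}$ on $[0,1]$. If $\lambda$ is an eigenvalue of the $\mu$-Laplacian $\Delta^\mu$, then $\lambda \in \mathbb R$ and $$2 \min_{i \in \{1,\dots,N\}} B_{i,i} \le \lambda \le 0,$$ where $B_{i,i} = -\alpha_{i-1}^{-2} - \alpha_i^{-2}$ with the convention $\alpha_0 := \alpha_N$.
   Context: $\delta_z$ is the Dirac measure at $z$. $L^2_\mu$ is the space of $\mu$-a.e. classes of real square-integrable functions on $[0,1]$ with inner product $\langle f,g\rangle_\mu = \sum_{i=1}^N \alpha_i f(z_i)g(z_i)$. $\mathscr D^1_\mu$ is the set of functions $f$ on $[0,1]$ for which there is $f' \in L^2_\mu$ with $f(0)=f(1)$ and $f(x) = f(0) + \int \mathbf 1_{[0,x)} f'\,d\mu$ for all $x\in[0,1]$ (with $[0,0)=\emptyset$); then $\nabla^\mu f := f'$, explicitly $\nabla^\mu f(z_n) = (f(z_{n+1})-f(z_n))/\alpha_n$ for $n<N$ and $\nabla^\mu f(z_N) = (f(z_1)-f(z_N))/\alpha_N$. Every class of $L^2_\mu$ has a representative in $\mathscr D^1_\mu$. The energy form is $\mathcal E(f,g) = \langle \nabla^\mu f, \nabla^\mu g\rangle_\mu$. A function $f \in \mathscr D^1_\mu$ belongs to $\mathscr D^2_\mu$ if there is $h \in L^2_\mu$ with $\mathcal E(f,g) = -\langle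 h, g\rangle_\mu$ for all $g\in\mathscr D^1_\mu$, and then $\Delta^\mu f := h$. Writing $A$ for the $N\times N$ matrix of $\nabla^\mu$ acting on $(f(z_1),\dots,f(z_N))^\top$ (so $A_{n,n} = -\alpha_n^{-1}$, $A_{n,n+1} = \alpha_n^{-1}$ for $n<N$, $A_{N,N} = -\alpha_N^{-1}$, $A_{N,1} = \alpha_N^{-1}$, other entries $0$), the paper takes $B := -A^\top A$ as matrix representation of $\Delta^\mu$; its diagonal entries are $B_{i,i} = -\alpha_{i-1}^{-2}-\alpha_i^{-2}$ (indices mod $N$). *)

(* Defs.v *)
From HB Require Import structures.
From mathcomp Require Import all_boot all_order all_algebra.
From mathcomp Require Import complex.
Set Implicit Arguments. Unset Strict Implicit. Unset Printing Implicit Defensive.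
Import Order.TTheory GRing.Theory Num.Theory.
Local Open Scope ring_scope.

(* Matrix A of the mu-gradient acting on (f(z_1),...,f(z_N))^T:
   A_{i,i} = -alpha_i^{-1}, A_{i,i+1 mod N} = alpha_i^{-1}, others 0
   (ordS i is the cyclic successor of i in 'I_N). *)
Definition grad_mx (R : fieldType) (N : nat) (alpha : 'I_N -> R) : 'M[R]_N :=
  \matrix_(i, j) (if j == i then - (alpha i)^-1
                  else if j == ordS i then (alpha i)^-1 else 0).

(* B := - A^T A, the paper's matrix representation of the mu-Laplacian. *)
Definition lap_mx (R : fieldType) (N : nat) (alpha : 'I_N -> R) : 'M[R]_N :=
  - ((grad_mx alpha)^T *m grad_mx alpha).

Definition is_eigenvalue (R : rcfType) (N : nat) (M : 'M[R]_N) (lam : R[i]) : Prop :=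
  exists2 v : 'cV[R[i]]_N, v != 0 & map_mx (fun x => (x%:C)%C) M *m v = lam *: v.

(* Main.v *)
Require Import Defs.
From HB Require Import structures.
From mathcomp Require Import all_boot all_order all_algebra.
From mathcomp Require Import complex.
From mathcomp Require Import ring lra.
Import Order.TTheory GRing.Theory Num.Theory.
Local Open Scope ring_scope.

Definition nr (R : rcfType) (z : R[i]) : R := let: Complex a b := z in a ^+ 2 + b ^+ 2.
Arguments nr {R}.

Lemma nr_ge0 (R : rcfType) (z : R[i]) : 0 <= nr z.
Proof. by case: z => a b; rewrite /nr addr_ge0 ?sqr_ge0. Qed.

Lemma conj_mul_nr (R : rcfType) (z : R[i]) : (conjc z * z) = ((nr z)%:C)%C.
Proof. case: z => a b; rewrite /nr /=; apply/eqP; rewrite eq_complex /=; apply/andP; split; apply/eqP; ring. Qed.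

Lemma ordS_neq n (k : 'I_n.+2) : ordS k != k.
Proof.
apply/eqP => /(congr1 val) /=; case: k => k hk /=.
case: (ltngtP k.+1 n.+2) => h.
- by rewrite modn_small // => /eqP; rewrite -[k.+1]addn1 -{2}[k]addn0 eqn_add2l.
- by move: h; rewrite ltnS leqNgt hk.
- by rewrite h modnn => k0; move: h; rewrite -k0.
Qed.

Lemma sum2 (V : nmodType) n (k : 'I_n.+2) (F : 'I_n.+2 -> V) :
  (forall j, j != k -> j != ordS k -> F j = 0) -> \sum_j F j = F k + F (ordS k).
Proof.
move=> H; rewrite (bigD1 k) //= (bigD1 (ordS k)) /=; last by rewrite ordS_neq.
by rewrite big1 ?addr0 // => j /andP[jk jS]; apply: H.
Qed.

Lemma grad_entry (R : fieldType) n (alpha : 'I_n.+2 -> R) k j :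
  grad_mx alpha k j = if j == k then - (alpha k)^-1
                  else if j == ordS k then (alpha k)^-1 else 0.
Proof. by rewrite mxE. Qed.

Lemma row_bound (R : rcfType) n (alpha : 'I_n.+2 -> R) (v : 'I_n.+2 -> R[i]) k :
  nr (\sum_j ((grad_mx alpha k j)%:C)%C * v j)
  <= 2 * \sum_j (grad_mx alpha k j) ^+ 2 * nr (v j).
Proof.
have Z : forall j, j != k -> j != ordS k -> grad_mx alpha k j = 0.
  by move=> j jk jS; rewrite grad_entry (negbTE jk) (negbTE jS).
rewrite (@sum2 _ _ k); last by move=> j a b; rewrite Z // mul0r.
rewrite (@sum2 _ _ k); last by move=> j a b; rewrite Z // expr0n mul0r.
rewrite !grad_entry eqxx (negbTE (ordS_neq _ k)) eqxx.
set a := (alpha k)^-1.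
case: (v k) => x1 x2; case: (v (ordS k)) => y1 y2 /=.
rewrite ?mul0r ?subr0 ?addr0 ?mulr0 ?add0r.
rewrite -subr_ge0.
have -> : 2 * ((- a) ^+ 2 * (x1 ^+ 2 + x2 ^+ 2) + a ^+ 2 * (y1 ^+ 2 + y2 ^+ 2)) -
  ((- a * x1 + a * y1) ^+ 2 + (- a * x2 + a * y2) ^+ 2) = a ^+ 2 * ((x1 + y1) ^+ 2 + (x2 + y2) ^+ 2) by ring.
by apply: mulr_ge0; [exact: sqr_ge0 | rewrite addr_ge0 // sqr_ge0].
Qed.

Lemma aux (R : rcfType) (x y : R) (p q : R[i]) :
  ((x * y)%:C)%C * (conjc p * q) = conjc ((x%:C)%C * p) * ((y%:C)%C * q).
Proof.
case: p => a b; case: q => c d; apply/eqP; rewrite eq_complex /=.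
by apply/andP; split; apply/eqP; ring.
Qed.

Theorem proposition3p1 (R : rcfType) (n : nat)
    (z alpha : 'I_n.+2 -> R)
    (hz0 : forall i, 0 <= z i) (hz1 : forall i, z i < 1)
    (hzinc : forall i j : 'I_n.+2, (i < j)%N -> z i < z j)
    (halpha : forall i, 0 < alpha i)
    (hsum : \sum_(i < n.+2) alpha i = 1)
    (lam : R[i]) :
  is_eigenvalue (lap_mx alpha) lam ->
  exists r : R, lam = (r%:C)%C /\
    2 * \big[Num.min/lap_mx alpha ord0 ord0]_(i < n.+2) lap_mx alpha i i <= r
    /\ r <= 0.
Proof.
move=> [v vn0 Hv].
set A := grad_mx alpha.
have HB : forall i j, lap_mx alpha i j = - \sum_k A k i * A k j.
  by move=> i j; rewrite /lap_mx !mxE; congr (- _); apply: eq_bigr => k _; rewrite mxE.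
have He : forall i, \sum_j ((lap_mx alpha i j)%:C)%C * v j 0 = lam * v i 0.
  move=> i; move/matrixP: Hv => /(_ i 0); rewrite !mxE => <-.
  by apply: eq_bigr => j _; rewrite /map_mx ?mxE.
set u := fun k => \sum_j ((A k j)%:C)%C * v j 0.
set s := \sum_i nr (v i 0).
set t := \sum_k nr (u k).
have key : lam * (s%:C)%C = - (t%:C)%C.
  transitivity (\sum_i conjc (v i 0) * (lam * v i 0)).
    rewrite rmorph_sum mulr_sumr; apply: eq_bigr => i _.
    by rewrite mulrCA conj_mul_nr.
  under eq_bigr do rewrite -He.
  transitivity (- \sum_k \sum_i \sum_j (((A k i * A k j)%:C)%C * (conjc (v i 0) * v j 0))).
    rewrite (exchange_big) /= -sumrN; apply: eq_bigr => i _.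
    rewrite (exchange_big) /= -sumrN mulr_sumr; apply: eq_bigr => j _.
    rewrite HB rmorphN rmorph_sum /= mulNr mulr_suml mulrN; congr (- _).
    by rewrite mulr_sumr; apply: eq_bigr => k _; ring.
  rewrite rmorph_sum /=; congr (- _); apply: eq_bigr => k _.
  rewrite -conj_mul_nr /u rmorph_sum /= mulr_suml; apply: eq_bigr => i _.
  rewrite mulr_sumr; apply: eq_bigr => j _.
  exact: aux.
have s_ge0 : 0 <= s by apply: sumr_ge0 => i _; exact: nr_ge0.
have t_ge0 : 0 <= t by apply: sumr_ge0 => k _; exact: nr_ge0.
have s_gt0 : 0 < s.
  rewrite lt_def s_ge0 andbT; apply/eqP => s0.
  move/negP: vn0; apply; apply/eqP/matrixP => i j; rewrite (ord1 j) mxE.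
  move/eqP: s0; rewrite psumr_eq0 => [/allP H|k _]; last exact: nr_ge0.
  have := H i (mem_index_enum _); case: (v i 0) => a b /=.
  rewrite paddr_eq0 ?sqr_ge0 // !sqrf_eq0 => /andP[/eqP -> /eqP ->] //.
have sC : (s%:C)%C != 0.
  by apply/eqP => -[h]; move: s_gt0; rewrite h ltxx.
set m := \big[Num.min/lap_mx alpha ord0 ord0]_(i < n.+2) lap_mx alpha i i.
have tb : t <= 2 * \sum_j nr (v j 0) * (- lap_mx alpha j j).
  apply: (le_trans (y := \sum_k 2 * \sum_j A k j ^+ 2 * nr (v j 0))).
    apply: ler_sum => k _; exact: (row_bound _ _ alpha (fun j => v j 0) k).
  rewrite le_eqVlt; apply/orP; left; apply/eqP.
  rewrite -mulr_sumr exchange_big /=; congr (2 * _); apply: eq_bigr => j _.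
  rewrite HB opprK mulrC mulr_suml; apply: eq_bigr => k _; by rewrite expr2.
have mb : \sum_j nr (v j 0) * (- lap_mx alpha j j) <= s * (- m).
  rewrite /s mulr_suml; apply: ler_sum => j _.
  by rewrite ler_wpM2l ?nr_ge0 // lerN2 /m; exact: bigmin_le.
exists (- t / s); split.
  apply: (mulIf sC); rewrite key -rmorphM /= mulfVK ?rmorphN //.
  by rewrite gt_eqF.
split.
  rewrite ler_pdivlMr //; nra.
by rewrite mulNr oppr_le0 divr_ge0 // ltW.
Qed.
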